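(* For every integer $F\ge6$, $$s(F,F,2)=3F-8+s(F-3,F-3,2).$$ (In particular, with $s(3,3,2)=1$, $s(4,4,2)=4$, $s(5,5,2)=7$, this determines $s(F,F,2)$ for all $F\ge3$.)
   Context: A placement delivery array $S$-PDA$(F,K,Z)$ is an $F\times K$ array $R=(r_{j,k})$, $1\le j\le F$, $1\le k\le K$, over a finite set $S$ such that: (1) each cell is either empty or contains an element of $S$; (2) each column contains exactly $Z$ empty cells; (3) each element of $S$ occurs at most once in each row and at most once in each column; (4) if two distinct nonempty cells satisfy $r_{j_1,k_1}=r_{j_2,k_2}=t\in S$, then the cells $r_{j_1,k_2}$ and $r_{j_2,k_1}$ are empty. For integers $F,K\ge1$, $0\le Z\le F$, define $s(F,K,Z)=\min\{|S| : \text{there exists an } S\text{-PDA}(F,K,Z)\}$. *)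

(* Defs.v *)
From mathcomp Require Import all_boot.
Set Implicit Arguments. Unset Strict Implicit. Unset Printing Implicit Defensive.

(* An F x K array over a finite symbol set S: each cell is None (empty)
   or Some t with t in S. *)
Definition is_PDA (F K Z : nat) (S : finType) (R : 'I_F -> 'I_K -> option S) : Prop :=
  (forall k : 'I_K, #|[set j : 'I_F | R j k == None]| = Z) /\
  (forall (j : 'I_F) (k1 k2 : 'I_K) (t : S),
      R j k1 = Some t -> R j k2 = Some t -> k1 = k2) /\
  (forall (j1 j2 : 'I_F) (k : 'I_K) (t : S),
      R j1 k = Some t -> R j2 k = Some t -> j1 = j2) /\
  (forall (j1 j2 : 'I_F) (k1 k2 : 'I_K) (t : S),
      (j1, k1) <> (j2, k2) -> R j1 k1 = Some t -> R j2 k2 = Some t ->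
      R j1 k2 = None /\ R j2 k1 = None).

Definition PDA_exists (F K Z : nat) (S : finType) : Prop :=
  exists R : 'I_F -> 'I_K -> option S, is_PDA Z R.

Definition is_s (F K Z n : nat) : Prop :=
  (exists S : finType, #|S| = n /\ PDA_exists F K Z S) /\
  (forall S : finType, PDA_exists F K Z S -> n <= #|S|).

(* Main.v *)
Require Import Defs.
From mathcomp Require Import all_boot.
From mathcomp Require Import zify.
Set Implicit Arguments. Unset Strict Implicit. Unset Printing Implicit Defensive.


Definition inv (F n : nat) (r : nat -> nat -> option nat) (p : nat -> nat) : Prop :=
  [/\ (forall k, k < F -> p k < F /\ p k <> k),
      (forall k1 k2, k1 < F -> k2 < F -> p k1 = p k2 -> k1 = k2),
      (forall j k, j < F -> k < F -> (r j k = None <-> (j = k \/ j = p k))),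
      (forall j k t, j < F -> k < F -> r j k = Some t -> t < n) &
      (forall j1 k1 j2 k2 t, j1 < F -> k1 < F -> j2 < F -> k2 < F ->
         (j1 <> j2 \/ k1 <> k2) -> r j1 k1 = Some t -> r j2 k2 = Some t ->
         r j1 k2 = None /\ r j2 k1 = None)].

Definition tri (i i' : nat) : bool :=
  ((i == 2) && (i' == 0)) || ((i == 0) && (i' == 1)) || ((i == 1) && (i' == 2)).

Definition stepr (F n : nat) (r : nat -> nat -> option nat) (p : nat -> nat) (j k : nat) : option nat :=
  if j < F then (if k < F then r j k else Some (n + 1 + 3*j + (k - F)))
  else if k < F then Some (if j - F == 0 then n+1+3*k+2 else if j - F == 1 then n+1+3*k
                           else n+1+3*(p k)+1)
  else if tri (j-F) (k-F) then Some n else None.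

Definition stepp (F : nat) (p : nat -> nat) (k : nat) : nat :=
  if k < F then p k else if k - F == 2 then F else k + 1.



Lemma lt3 a : a < 3 -> a = 0 \/ a = 1 \/ a = 2.
Proof. lia. Qed.

Lemma tri_cross a1 b1 a2 b2 : a1 < 3 -> b1 < 3 -> a2 < 3 -> b2 < 3 ->
  tri a1 b1 -> tri a2 b2 -> (a1 <> a2 \/ b1 <> b2) -> ~~ tri a1 b2 /\ ~~ tri a2 b1.
Proof.
move=> /lt3 [->|[->|->]] /lt3 [->|[->|->]] /lt3 [->|[->|->]] /lt3 [->|[->|->]] //= _ _; lia.
Qed.

Section Step.
Variables (F n : nat) (r : nat -> nat -> option nat) (p : nat -> nat).
Hypothesis (Hinv : inv F n r p).

Lemma ex_new j : F <= j -> j < F + 3 -> exists a, j = F + a /\ a < 3.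
Proof. move=> *; exists (j - F); lia. Qed.

Lemma nltF a : (F + a < F) = false.
Proof. by rewrite ltnNge leq_addr. Qed.

Lemma cell_old j k t : j < F + 3 -> k < F + 3 -> stepr F n r p j k = Some t -> t < n ->
  [/\ j < F, k < F & r j k = Some t].
Proof.
move=> Hj Hk; rewrite /stepr; case: (ltnP j F) => Hj'; case: (ltnP k F) => Hk' //;
  try (by case=> <-; lia).
- case: ifP => _; [by case=> <-; lia|]; case: ifP => _; by case=> <-; lia.
- by case: ifP => // _ [<-]; lia.
Qed.

Lemma cell_n j k : j < F + 3 -> k < F + 3 -> stepr F n r p j k = Some n ->
  exists a b, [/\ j = F + a, k = F + b, a < 3, b < 3 & tri a b].
Proof.
case: Hinv => _ _ _ Hb _.
move=> Hj Hk; rewrite /stepr; case: (ltnP j F) => Hj'; case: (ltnP k F) => Hk'.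
- by move=> /(Hb _ _ _ Hj' Hk'); lia.
- by case; lia.
- case: ifP => _; [by case; lia|]; case: ifP => _; by case; lia.
- case: ifP => // Ht _; exists (j - F), (k - F); split => //; lia.
Qed.

Lemma cell_new j k t : j < F + 3 -> k < F + 3 -> stepr F n r p j k = Some t -> n < t ->
  (j < F /\ F <= k /\ t = n + 1 + 3 * j + (k - F)) \/
  (k < F /\ ((j = F /\ t = n+1+3*k+2) \/ (j = F + 1 /\ t = n+1+3*k) \/
              (j = F + 2 /\ t = n+1+3*(p k)+1))).
Proof.
case: Hinv => _ _ _ Hb _.
move=> Hj Hk; rewrite /stepr; case: (ltnP j F) => Hj'; case: (ltnP k F) => Hk'.
- by move=> /(Hb _ _ _ Hj' Hk'); lia.
- by case=> <-; left; lia.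
- case: ifP => /eqP H0; [by case=> <-; right; lia|]; case: ifP => /eqP H1;
    by case=> <-; right; lia.
- by case: ifP => // _ [<-]; lia.
Qed.

Lemma step_inv :
  inv (F+3) (n + 3*F + 1) (stepr F n r p) (stepp F p).
Proof.
have Hinv' := Hinv.
case: Hinv' => Hp Hpi Hr Hb Hx; split.
- move=> k Hk; rewrite /stepp; case: ifP => H1.
    by have [] := Hp k H1; lia.
  case: ifP => /eqP H2; lia.
- move=> k1 k2 H1 H2; rewrite /stepp.
  case: (ltnP k1 F) => A1; case: (ltnP k2 F) => A2.
  + exact: Hpi.
  + have [] := Hp k1 A1; case: ifP => _; lia.
  + have [] := Hp k2 A2; case: ifP => _; lia.
  + case: ifP => /eqP B1; case: ifP => /eqP B2; lia.
- move=> j k Hj Hk; rewrite /stepr /stepp.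
  case: (ltnP j F) => Hj'; case: (ltnP k F) => Hk'.
  + exact: Hr.
  + split => //; case: ifP => _; lia.
  + have [] := Hp k Hk'; split; [by case: ifP => _; [|case: ifP]|lia].
  + have [a [-> Ha]] := ex_new Hj' Hj; have [b [-> Hb']] := ex_new Hk' Hk.
    rewrite !addKn.
    move: Ha Hb' => /lt3 [->|[->|->]] /lt3 [->|[->|->]] /=; split=> //; lia.
- move=> j k t Hj Hk E.
  case: (ltnP n t) => Ht; last lia.
  case: (cell_new Hj Hk E Ht); first lia.
  case=> Hk' [[_ ->]|[[_ ->]|[_ ->]]]; last have [] := Hp k Hk'; lia.
- move=> j1 k1 j2 k2 t Hj1 Hk1 Hj2 Hk2 Hd E1 E2.
  case: (ltnP t n) => Ht.
    have [Hj1' Hk1' E1'] := cell_old Hj1 Hk1 E1 Ht.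
    have [Hj2' Hk2' E2'] := cell_old Hj2 Hk2 E2 Ht.
    rewrite /stepr Hj1' Hk1' Hj2' Hk2'; exact: (Hx _ _ _ _ _ Hj1' Hk1' Hj2' Hk2' Hd E1' E2').
  case: (eqVneq t n) => [Etn|Htn].
    subst t.
    have [a1 [b1 [Q1 Q2 Ha1 Hb1 T1]]] := cell_n Hj1 Hk1 E1.
    have [a2 [b2 [Q3 Q4 Ha2 Hb2 T2]]] := cell_n Hj2 Hk2 E2.
    subst j1 k1 j2 k2.
    have Hd' : a1 <> a2 \/ b1 <> b2 by case: Hd => H; [left|right]; lia.
    have [N1 N2] := tri_cross Ha1 Hb1 Ha2 Hb2 T1 T2 Hd'.
    by rewrite /stepr !nltF !addKn (negbTE N1) (negbTE N2).
  have Ht' : n < t by lia.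
  have C1 := cell_new Hj1 Hk1 E1 Ht'; have C2 := cell_new Hj2 Hk2 E2 Ht'.
  have rd k : k < F -> r k k = None by move=> Hk; apply/(proj2 (Hr _ _ Hk Hk)); left.
  have rp k : k < F -> r (p k) k = None.
    by move=> Hk; have [Hpk _] := Hp k Hk; apply/(proj2 (Hr _ _ Hpk Hk)); right.
  case: C1 => [[A1 [B1 T1]]|[B1 [[A1 T1]|[[A1 T1]|[A1 T1]]]]];
  case: C2 => [[A2 [B2 T2]]|[B2 [[A2 T2]|[[A2 T2]|[A2 T2]]]]]; try lia.
  all: try (have [X Y] : j1 = k2 /\ k1 = F + 2 by lia); 
       try (have [X Y] : j1 = k2 /\ k1 = F + 0 by lia);
       try (have [X Y] : j1 = p k2 /\ k1 = F + 1 by lia);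
       try (have [X Y] : j2 = k1 /\ k2 = F + 2 by lia);
       try (have [X Y] : j2 = k1 /\ k2 = F + 0 by lia);
       try (have [X Y] : j2 = p k1 /\ k2 = F + 1 by lia).
  all: try (have [Pk1 _] := Hp k1 B1); try (have [Pk2 _] := Hp k2 B2).
  all: try (rewrite /stepr ?X ?Y ?A1 ?A2 ?B1 ?B2 ?Pk1 ?Pk2 ?nltF ?addKn ?ltnn ?subnn /=; split;
            by [ | apply: rd | apply: rp]).

  have E : p k1 = p k2 by lia.
  have := Hpi _ _ B1 B2 E; lia.
Qed.
End Step.

Definition Good (F n : nat) : Prop :=
  (exists r p, inv F n r p) /\ 6 * n + 7 * F <= 3 * F * F + 4.

Lemma good_step F n : Good F n -> Good (F + 3) (n + 3 * F + 1).
Proof.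
case=> [[r [p H]] A]; split; last nia.
by exists (stepr F n r p), (stepp F p); apply: step_inv.
Qed.

Lemma good0 : Good 0 0.
Proof. split=> //; exists (fun _ _ => None), id; split=> //. Qed.

Lemma good2 : Good 2 0.
Proof.
split=> //; exists (fun _ _ => None), (fun k => 1 - k); split=> //; try lia.
move=> j k Hj Hk; split=> // _; lia.
Qed.

Definition r4 (j k : nat) : option nat :=
  if (j < 2) == (k < 2) then None else Some (2 * minn j k + (maxn j k - 2)).
Definition p4 (k : nat) : nat := if k < 2 then 1 - k else 5 - k.

Lemma lt4 a : a < 4 -> a = 0 \/ a = 1 \/ a = 2 \/ a = 3.
Proof. lia. Qed.

Lemma good4 : Good 4 4.
Proof.
split=> //; exists r4, p4; split.
- move=> k /lt4 [->|[->|[->|->]]] //.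
- move=> k1 k2 /lt4 [->|[->|[->|->]]] /lt4 [->|[->|[->|->]]] //.
- move=> j k /lt4 [->|[->|[->|->]]] /lt4 [->|[->|[->|->]]] //=; split=> //; first [by left | by right | by case].
- move=> j k t /lt4 [->|[->|[->|->]]] /lt4 [->|[->|[->|->]]] //= [<-] //.
- move=> j1 k1 j2 k2 t /lt4 [->|[->|[->|->]]] /lt4 [->|[->|[->|->]]]
    /lt4 [->|[->|[->|->]]] /lt4 [->|[->|[->|->]]] //= Hd [<-] // /(congr1 (odflt 0)) /= E; try done; exfalso; lia.
Qed.

Lemma good_all m : forall F, F <= m -> F != 1 -> exists n, Good F n.
Proof.
elim: m => [|m IH] F HF H1.
  have -> : F = 0 by lia.
  by exists 0; exact: good0.
case: (ltnP F 6) => HF6.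
- have : F = 0 \/ F = 2 \/ F = 3 \/ F = 4 \/ F = 5 by lia.
  case=> [->|[->|[->|[->|->]]]].
  + exists 0; exact: good0.
  + exists 0; exact: good2.
  + exists 1; exact: (good_step good0).
  + exists 4; exact: good4.
  + exists 7; exact: (good_step good2).
- have [n Hn] := IH (F - 3) ltac:(lia) ltac:(lia).
  exists (n + 3 * (F - 3) + 1).
  have := good_step Hn; by have -> : F - 3 + 3 = F by lia.
Qed.

Lemma PDA_of_inv F n r p : inv F n r p -> PDA_exists F F 2 ('I_n).
Proof.
case=> Hp Hpi Hr Hb Hx.
pose R (j k : 'I_F) : option 'I_n := obind (fun t => insub t) (r j k).
have RN j k : (R j k = None) <-> (r j k = None).
  rewrite /R; case E: (r j k) => [t|] //=; split=> // .
  by rewrite insubT //; apply: Hb E.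
have RS j k (x : 'I_n) : R j k = Some x -> r j k = Some (val x).
  rewrite /R; case E: (r j k) => [t|] //=.
  by case: insubP => // u _ <- [->].
have RS2 (j k : 'I_F) (t : 'I_n) : r j k = Some (val t) -> R j k = Some t.
  by move=> E; rewrite /R E /= valK.
have X4 : forall (j1 j2 k1 k2 : 'I_F) (t : 'I_n),
      (j1, k1) <> (j2, k2) -> R j1 k1 = Some t -> R j2 k2 = Some t ->
      R j1 k2 = None /\ R j2 k1 = None.
  move=> j1 j2 k1 k2 t Hd /RS E1 /RS E2.
  have Hd' : (j1 : nat) <> j2 \/ (k1 : nat) <> k2.
    case: (eqVneq j1 j2) => [e|/eqP ne]; last by left => /val_inj.
    right => /val_inj e'; by apply: Hd; rewrite e e'.
  have [] := Hx _ _ _ _ _ (ltn_ord j1) (ltn_ord k1) (ltn_ord j2) (ltn_ord k2) Hd' E1 E2.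
  by move=> /RN ? /RN ?.
exists R; split; last split; last split.
- move=> k.
  have [pk nk] := Hp k (ltn_ord k).
  have -> : [set j | R j k == None] = [set k; Ordinal pk].
    apply/setP => j; rewrite !inE; apply/eqP/idP.
      move=> /RN /(Hr _ _ (ltn_ord j) (ltn_ord k)) [e|e]; apply/orP; [left|right];
        apply/eqP/val_inj => //.
    move=> /orP [] /eqP -> ; apply/RN/(Hr _ _ (ltn_ord _) (ltn_ord _)); [left|right] => //.
  rewrite cards2; case: eqP => // /(congr1 val) /= e; by case: nk.
- move=> j k1 k2 t E1 E2; case: (eqVneq k1 k2) => // ne.
  have Hd : (j, k1) <> (j, k2) by case=> e; move: ne; rewrite e eqxx.
  have [h _] := X4 j j k1 k2 t Hd E1 E2.
  by rewrite E2 in h.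
- move=> j1 j2 k t E1 E2; case: (eqVneq j1 j2) => // ne.
  have Hd : (j1, k) <> (j2, k) by case=> e; move: ne; rewrite e eqxx.
  have [h _] := X4 j1 j2 k k t Hd E1 E2.
  by rewrite E1 in h.
- move=> j1 j2 k1 k2 t Hd E1 E2; exact: X4 Hd E1 E2.
Qed.

Lemma card_sum (T : finType) (P : pred T) : #|[set x | P x]| = \sum_x P x.
Proof.
rewrite -sum1_card big_mkcond /=; apply: eq_bigr => x _; rewrite inE; by case: (P x).
Qed.

Lemma two_cases (T : finType) (A : {set T}) a b w :
  #|A| = 2 -> a \in A -> b \in A -> a != b -> w \in A -> w = a \/ w = b.
Proof.
move=> A2 Ha Hb nab Hw.
have E : [set a; b] == A.
  by rewrite eqEcard subUset !sub1set Ha Hb cards2 nab A2.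
by move: Hw; rewrite -(eqP E) !inE => /orP [] /eqP ->; [left|right].
Qed.

Lemma two_le (T : finType) (A : {set T}) a b : a \in A -> b \in A -> a != b -> 2 <= #|A|.
Proof.
move=> Ha Hb nab; have <- : #|[set a; b]| = 2 by rewrite cards2 nab.
by apply: subset_leq_card; rewrite subUset !sub1set Ha Hb.
Qed.

Section LBs.
Variables (F : nat) (S : finType) (R : 'I_F -> 'I_F -> option S).
Hypothesis HR : is_PDA 2 R.

Local Notation cell := (prod 'I_F 'I_F).

Definition sym (c : cell) : option S := R c.1 c.2.

Lemma colE k : #|[set j | R j k == None]| = 2.
Proof. by case: HR. Qed.

Lemma cross (c d : cell) t : sym c = Some t -> sym d = Some t -> c != d ->
  R c.1 d.2 = None /\ R d.1 c.2 = None.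
Proof.
case: HR => _ [_ [_ H4]] Ec Ed ncd.
apply: (H4 _ _ _ _ t) => //.
by move=> E; move: ncd; rewrite [c]surjective_pairing [d]surjective_pairing E eqxx.
Qed.

Lemma diff_rc (c d : cell) t : sym c = Some t -> sym d = Some t -> c != d ->
  c.1 != d.1 /\ c.2 != d.2.
Proof.
move=> Ec Ed ncd; have [X1 X2] := cross Ec Ed ncd.
split; apply/negP => /eqP E.
  by move: X1; rewrite E; rewrite /sym in Ed; rewrite Ed.
by move: X1; rewrite -E; rewrite /sym in Ec; rewrite Ec.
Qed.

Definition O (t : S) := [set c : cell | sym c == Some t].
Definition msz (c : cell) := if sym c is Some t then #|O t| else 0.

Lemma O_le3 t : #|O t| <= 3.
Proof.
case: (set_0Vmem (O t)) => [->|[c Hc]]; first by rewrite cards0.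
have Ec : sym c = Some t by move: Hc; rewrite inE => /eqP.
rewrite (cardsD1 c) Hc add1n ltnS.
rewrite -(colE c.2) -(@card_in_imset _ _ fst (O t :\ c)).
  apply: subset_leq_card; apply/subsetP => j /imsetP [d Hd ->].
  move: Hd; rewrite !inE => /andP [ndc /eqP Ed].
  rewrite eq_sym in ndc; have [_ X] := cross Ec Ed ndc; by rewrite X.
move=> d1 d2; rewrite !inE => /andP [_ /eqP E1] /andP [_ /eqP E2] E.
apply/eqP; apply/negP => /negP n12.
by have [] := diff_rc E1 E2 n12; rewrite E eqxx.
Qed.


Lemma sum_sym (X : cell -> nat) :
  \sum_(c | sym c != None) X c = \sum_t \sum_(c | sym c == Some t) X c.
Proof.
rewrite (eq_bigr (fun t => \sum_c (if sym c == Some t then X c else 0))); last first.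
  by move=> t _; rewrite big_mkcond.
rewrite exchange_big big_mkcond /=; apply: eq_bigr => c _.
case E: (sym c) => [t0|] /=.
- rewrite (bigD1 t0) //= eqxx big1 ?addn0 // => t nt.
  by case: eqP => // [[e]]; rewrite e eqxx in nt.
- by rewrite big1.
Qed.

Lemma cnt (g : nat -> nat) :
  \sum_(c | sym c != None) g (msz c) = \sum_t #|O t| * g #|O t|.
Proof.
rewrite sum_sym; apply: eq_bigr => t _.
rewrite (eq_bigr (fun _ => g #|O t|)); last by move=> c /eqP E; rewrite /msz E.
rewrite (eq_bigl (fun c => c \in O t)); first by rewrite sum_nat_const.
by move=> c; rewrite inE.
Qed.

Lemma drop_none (X : cell -> nat) : (forall c, sym c = None -> X c = 0) ->
  \sum_c X c = \sum_(c | sym c != None) X c.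
Proof.
move=> H0; rewrite [RHS]big_mkcond /=; apply: eq_bigr => c _.
by case E: (sym c) => [t|] //=; rewrite H0.
Qed.

Lemma col_ne k : #|[set j | R j k != None]| = F - 2.
Proof.
have := cardsC [set j | R j k == None]; rewrite card_ord colE.
have -> : ~: [set j | R j k == None] = [set j | R j k != None].
  by apply/setP => j; rewrite !inE.
lia.
Qed.

Lemma NE_card : \sum_(c | sym c != None) 1 = F * (F - 2).
Proof.
rewrite big_mkcond /= -(pair_bigA _ (fun j k => if R j k != None then 1 else 0)) /=.
rewrite exchange_big /=.
rewrite (eq_bigr (fun _ => F - 2)); first by rewrite sum_nat_const card_ord.
move=> k _; rewrite -(col_ne k) card_sum; apply: eq_bigr => j _; by case: (R j k).
Qed.

Lemma main_count :
  F * (F - 2) + \sum_t (#|O t| == 1) <= 2 * #|S| + \sum_t (#|O t| == 3).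
Proof.
rewrite -NE_card (cnt (fun _ => 1)) /=.
rewrite -sum1_card big_distrr /= -!big_split /=; apply: leq_sum => t _.
by have := O_le3 t; case: #|O t| => [|[|[|[|]]]].
Qed.

Definition T1 := [set c | msz c == 1].
Definition T3 := [set c | msz c == 3].

Lemma T1_card : #|T1| = \sum_t (#|O t| == 1).
Proof.
rewrite card_sum (drop_none (X := fun c => (msz c == 1) : nat)); last first.
  by move=> c E; rewrite /msz E.
rewrite (cnt (fun n => (n == 1) : nat)); apply: eq_bigr => t _.
by case: (eqVneq #|O t| 1) => [->|_] //=; by rewrite !muln0.
Qed.

Lemma T3_card : #|T3| = 3 * \sum_t (#|O t| == 3).
Proof.
rewrite card_sum (drop_none (X := fun c => (msz c == 3) : nat)); last first.
  by move=> c E; rewrite /msz E.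
rewrite (cnt (fun n => (n == 3) : nat)) big_distrr; apply: eq_bigr => t _.
by case: (eqVneq #|O t| 3) => [->|_] //=; by rewrite !muln0.
Qed.


Definition C := [set k : 'I_F | [exists j, msz (j, k) == 3]].
Definition A (v : 'I_F) := [set k in C | R v k == None].
Definition h v := #|A v|.
Definition W := [set v | 0 < h v].

Lemma symO c t : sym c = Some t -> c \in O t.
Proof. by rewrite inE => ->. Qed.

Lemma T3_sym c d : c \in T3 -> sym d = sym c -> d \in T3.
Proof. by rewrite !inE /msz => H ->. Qed.

Lemma T3_some c : c \in T3 -> exists t, sym c = Some t /\ #|O t| = 3.
Proof. rewrite inE /msz; case: (sym c) => [t|] // /eqP H; by exists t. Qed.

Lemma inC c : c \in T3 -> c.2 \in C.
Proof. move=> H; rewrite inE; apply/existsP; exists c.1; rewrite -surjective_pairing; by move: H; rewrite inE. Qed.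

Lemma other c : c \in T3 -> exists d, sym d = sym c /\ d != c.
Proof.
move=> /T3_some [t [Et Ot]].
have : 0 < #|O t :\ c| by move: Ot; rewrite (cardsD1 c) (symO Et); lia.
rewrite card_gt0 => /set0Pn [d]; rewrite !inE => /andP [ndc /eqP Ed].
by exists d; rewrite Ed Et.
Qed.

Lemma third c d : c \in T3 -> sym d = sym c -> d != c ->
  exists e, [/\ sym e = sym c, e != c & e != d].
Proof.
move=> /T3_some [t [Et Ot]] Ed ndc; rewrite Et in Ed.
have : 0 < #|O t :\ c :\ d|.
  move: Ot; rewrite (cardsD1 c) (symO Et) (cardsD1 d) !inE ndc Ed eqxx /=; lia.
rewrite card_gt0 => /set0Pn [e]; rewrite !inE => /and3P [ned nec /eqP Ee].
by exists e; rewrite Ee Et.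
Qed.

Lemma h_ge2 v k : k \in A v -> 2 <= h v.
Proof.
rewrite inE => /andP [kC /eqP Rvk].
move: kC; rewrite inE => /existsP [j Hj].
have cT : (j, k) \in T3 by rewrite inE.
have [t [Et _]] := T3_some cT.
have [d [Ed ndc]] := other cT.
have [e [Ee nec ned]] := third cT Ed ndc.
rewrite Et in Ed Ee.
have ncd : (j, k) != d by rewrite eq_sym.
have nce : (j, k) != e by rewrite eq_sym.
have nde : d != e by rewrite eq_sym.
have [_ Rdk] := cross Et Ed ncd.
have [_ Rek] := cross Et Ee nce.
have [nde1 _] := diff_rc Ed Ee nde.
have dT : d \in T3 := T3_sym cT (etrans Ed (esym Et)).
have eT : e \in T3 := T3_sym cT (etrans Ee (esym Et)).
have [_ nke] := diff_rc Et Ee nce.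
have [_ nkd] := diff_rc Et Ed ncd.
have kA : k \in A v by rewrite inE Rvk eqxx andbT; apply: (inC cT).
have [vd|ve] := two_cases (colE k) (a := d.1) (b := e.1) (w := v)
   ltac:(by rewrite inE Rdk) ltac:(by rewrite inE Rek) nde1 ltac:(by rewrite inE Rvk).
- have [Rde _] := cross Ed Ee nde.
  apply: (two_le kA (b := e.2)) => //.
  by rewrite inE vd Rde eqxx andbT; apply: (inC eT).
- have [Red _] := cross Ee Ed (ltac:(by rewrite eq_sym) : e != d).
  apply: (two_le kA (b := d.2)) => //.
  by rewrite inE ve Red eqxx andbT; apply: (inC dT).
Qed.

Lemma h_ne1 v : h v != 1.
Proof.
apply/eqP => H1; have : 0 < h v by rewrite H1.
rewrite /h card_gt0 => /set0Pn [k /h_ge2]; lia.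
Qed.

Lemma h_leF v : h v <= F.
Proof. by have := max_card (A v); rewrite card_ord. Qed.

Lemma card_pair (T U : finType) (Q : T -> U -> bool) :
  #|[set x : T * U | Q x.1 x.2]| = \sum_t #|[set u | Q t u]|.
Proof.
rewrite card_sum; under [RHS]eq_bigr => t _ do rewrite card_sum.
by rewrite pair_bigA.
Qed.

Lemma card_pair2 (T U : finType) (Q : T -> U -> bool) :
  #|[set x : T * U | Q x.1 x.2]| = \sum_u #|[set t | Q t u]|.
Proof.
rewrite card_pair; under eq_bigr => t _ do rewrite card_sum.
rewrite exchange_big; apply: eq_bigr => u _; by rewrite card_sum.
Qed.

Lemma sum_h : \sum_v h v = 2 * #|C|.
Proof.
have -> : \sum_v h v = #|[set x : 'I_F * 'I_F | (x.2 \in C) && (R x.1 x.2 == None)]|.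
  rewrite (card_pair (fun v k => (k \in C) && (R v k == None))); apply: eq_bigr => v _; rewrite /h /A; congr #|_|.
rewrite (card_pair2 (fun v k => (k \in C) && (R v k == None))) (eq_bigr (fun k => if k \in C then 2 else 0)).
  by rewrite -big_mkcond sum_nat_const mulnC.
move=> k _; case: (k \in C) => /=; last by rewrite (eq_card0 (A := _)) // => v; rewrite inE.
by rewrite -(colE k).
Qed.



Lemma D1 : 2 * #|T3| <= \sum_v h v * (h v - 1).
Proof.
pose P := [set cc : cell * cell | (cc.1 \in T3) && ((sym cc.2 == sym cc.1) && (cc.2 != cc.1))].
have cP : #|P| = 2 * #|T3|.
  rewrite (card_pair (fun c1 c2 => (c1 \in T3) && ((sym c2 == sym c1) && (c2 != c1)))).
  rewrite (eq_bigr (fun c => if c \in T3 then 2 else 0)).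
    by rewrite -big_mkcond sum_nat_const mulnC.
  move=> c _; case cT: (c \in T3) => /=; last by apply: eq_card0 => d; rewrite inE.
  have [t [Et Ot]] := T3_some cT.
  have -> : [set d | (sym d == sym c) && (d != c)] = O t :\ c.
    by apply/setP => d; rewrite !inE Et andbC.
  by move: Ot; rewrite (cardsD1 c) (symO Et) add1n => [[]].
pose D := [set x : 'I_F * ('I_F * 'I_F) |
            (x.2.1 \in A x.1) && ((x.2.2 \in A x.1) && (x.2.1 != x.2.2))].
have cD : #|D| = \sum_v h v * (h v - 1).
  rewrite (card_pair (fun v kk => (kk.1 \in A v) && ((kk.2 \in A v) && (kk.1 != kk.2)))).
  apply: eq_bigr => v _.
  rewrite (card_pair (fun k k' => (k \in A v) && ((k' \in A v) && (k != k')))).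
  rewrite (eq_bigr (fun k => if k \in A v then h v - 1 else 0)).
    by rewrite -big_mkcond sum_nat_const mulnC.
  move=> k _; case kA: (k \in A v) => /=; last by apply: eq_card0 => k'; rewrite inE.
  have -> : [set k' | (k' \in A v) && (k != k')] = A v :\ k.
    by apply/setP => k'; rewrite in_setD1 in_set [k == k']eq_sym andbC.
  by rewrite /h (cardsD1 k (A v)) kA add1n subn1.
pose f := fun cc : cell * cell => (cc.1.2, cc.2.2).
have inj : {in P &, injective f}.
  move=> [c1 c2] [d1 d2]; rewrite !inE => /and3P [c1T /eqP E12 n21]
    /and3P [d1T /eqP F12 m21] [ek ek'].
  move: n21 m21 E12 F12 ek ek' c1T d1T; rewrite /=.
  move=> n21 m21 E12 F12 ek ek' c1T d1T.
  have {}c1T : c1 \in T3 by rewrite inE.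
  have {}d1T : d1 \in T3 by rewrite inE.
  have [e [Ee ne1 ne2]] := third c1T E12 n21.
  have [t [Et _]] := T3_some c1T.
  have [u [Eu _]] := T3_some d1T.
  rewrite Et in E12 Ee; rewrite Eu in F12.
  have n12 : c1 != c2 by rewrite eq_sym.
  have m12 : d1 != d2 by rewrite eq_sym.
  have n1e : c1 != e by rewrite eq_sym.
  have n2e : c2 != e by rewrite eq_sym.
  have [X1 X2] := cross Et E12 n12.
  have [X3 X4] := cross Et Ee n1e.
  have [X5 X6] := cross E12 Ee n2e.
  have [Y1 Y2] := cross Eu F12 m12.
  have [D1 _] := diff_rc E12 Ee n2e.
  have [D2 _] := diff_rc Et Ee n1e.
  have Rc1 : R c1.1 c1.2 = Some t by [].
  have Rd1 : R d1.1 d1.2 = Some u by [].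
  have Rd2 : R d2.1 d2.2 = Some u by [].
  have Rc2 : R c2.1 c2.2 = Some t by [].
  have [h1|h1] := two_cases (colE c2.2) (a := c1.1) (b := e.1) (w := d1.1)
     ltac:(by rewrite inE X1) ltac:(by rewrite inE X6) D2 ltac:(by rewrite inE ek' Y1).
  - have [h2|h2] := two_cases (colE c1.2) (a := c2.1) (b := e.1) (w := d2.1)
       ltac:(by rewrite inE X2) ltac:(by rewrite inE X4) D1 ltac:(by rewrite inE ek Y2).
    + by rewrite [c1]surjective_pairing [c2]surjective_pairing
                 [d1]surjective_pairing [d2]surjective_pairing h1 h2 ek ek'.
    + by move: Rd2; rewrite h2 -ek' X6.
  - by move: Rd1; rewrite h1 -ek X4.
have sub : f @: P \subset snd @: D.
  apply/subsetP => kk /imsetP [[c1 c2]]; rewrite inE => /and3P [c1T /eqP E12 n21] ->.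
  move: n21 E12 c1T; rewrite /= => n21 E12 c1T.
  have [e [Ee ne1 ne2]] := third c1T E12 n21.
  have [t [Et _]] := T3_some c1T.
  have c2T : c2 \in T3 := T3_sym c1T E12.
  rewrite Et in E12 Ee.
  have n12 : c1 != c2 by rewrite eq_sym.
  have n1e : c1 != e by rewrite eq_sym.
  have n2e : c2 != e by rewrite eq_sym.
  have [X3 X4] := cross Et Ee n1e.
  have [X5 X6] := cross E12 Ee n2e.
  have [_ D3] := diff_rc Et E12 n12.
  apply/imsetP; exists (e.1, (c1.2, c2.2)) => //.
  rewrite [_ \in D]inE /= D3 andbT; apply/andP; split;
    by rewrite [_ \in A _]inE ?(inC c1T) ?(inC c2T) ?X4 ?X6.
rewrite -cP -cD -(card_in_imset inj).
exact: leq_trans (subset_leq_card sub) (leq_imset_card _ _).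
Qed.


Definition X := [set c : cell | (c.2 \in C) && (R c.1 c.2 != None)].
Definition Y1 := [set c : cell | (c.1 \in W) && (R c.1 c.2 != None)].
Definition g (c : cell) : cell := if (c.1 \in W) || (c \in T1) then c
  else odflt c [pick d | (sym d == sym c) && (d != c)].

Lemma inW v k : k \in A v -> v \in W.
Proof. by move=> kA; rewrite inE /h card_gt0; apply/set0Pn; exists k. Qed.

Lemma gP c : c \in X -> c.1 \notin W -> c \notin T1 ->
  [/\ sym (g c) = sym c, g c != c, (g c).1 \in W & (g c).2 \notin C].
Proof.
rewrite inE => /andP [cC cN] nW nT.
have [t Ec] : exists t, sym c = Some t by move: cN; rewrite /sym; case: (R c.1 c.2) => [t|] //; exists t.
rewrite /g (negbTE nW) (negbTE nT) /=.
case: pickP => [d /andP [/eqP Ed ndc] | H] /=.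
- rewrite Ec in Ed; have ncd : c != d by rewrite eq_sym.
  have [X1 X2] := cross Ec Ed ncd.
  split => //; first by rewrite Ed.
  + by apply: (inW (k := c.2)); rewrite inE cC X2.
  + apply/negP => dC; move/negP: nW; apply; apply: (inW (k := d.2)).
    by rewrite inE dC X1.
- exfalso.
  have : 0 < #|O t :\ c|.
    move: nT; rewrite inE /msz Ec; move: (cardsD1 c (O t)); rewrite (symO Ec) add1n.
    by move=> -> /=; case: #|O t :\ c|.
  rewrite card_gt0 => /set0Pn [d]; rewrite !inE => /andP [ndc /eqP Ed].
  by have := H d; rewrite Ed Ec eqxx ndc.
Qed.

Lemma g_id c : (c.1 \in W) || (c \in T1) -> g c = c.
Proof. by rewrite /g => ->. Qed.

Lemma D4 : #|X| <= #|Y1| + #|T1|.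
Proof.
have ginj : {in X &, injective g}.
  move=> c1 c2 H1 H2.
  case: (boolP ((c1.1 \in W) || (c1 \in T1))) => b1;
  case: (boolP ((c2.1 \in W) || (c2 \in T1))) => b2.
  - by rewrite !g_id.
  - rewrite (g_id b1) => E; move: b2; rewrite negb_or => /andP [n1 n2].
    have [_ _ _ nC] := gP H2 n1 n2; move: H1; rewrite inE E => /andP [cC _].
    by rewrite cC in nC.
  - rewrite (g_id b2) => E; move: b1; rewrite negb_or => /andP [n1 n2].
    have [_ _ _ nC] := gP H1 n1 n2; move: H2; rewrite inE -E => /andP [cC _].
    by rewrite cC in nC.
  - move: b1 b2; rewrite !negb_or => /andP [n11 n12] /andP [n21 n22] E.
    have [S1 _ _ _] := gP H1 n11 n12; have [S2 _ _ _] := gP H2 n21 n22.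
    apply/eqP; apply/negP => /negP n12'.
    have [t Ec] : exists t, sym c1 = Some t.
      by move: H1; rewrite inE /sym; case: (R c1.1 c1.2) => [t|]; rewrite ?andbF //; exists t.
    have Ec2 : sym c2 = Some t by rewrite -S2 -E S1.
    have [_ X2] := cross Ec Ec2 n12'.
    move: H1; rewrite inE => /andP [cC _].
    by move/negP: n21; apply; apply: (inW (k := c1.2)); rewrite inE cC X2.
rewrite -(card_in_imset ginj).
have sub : g @: X \subset Y1 :|: T1.
  apply/subsetP => y /imsetP [c Hc ->].
  case: (boolP ((c.1 \in W) || (c \in T1))) => b.
  - rewrite (g_id b); case/orP: b => b; rewrite inE; apply/orP; [left|right] => //.
    by move: Hc; rewrite [c \in Y1]inE b /= inE => /andP [].
  - move: b; rewrite negb_or => /andP [n1 n2].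
    have [S1 _ W1 _] := gP Hc n1 n2.
    rewrite inE; apply/orP; left; rewrite inE W1 /=.
    by move: Hc; rewrite inE => /andP [_]; rewrite -/(sym c) -S1.
apply: leq_trans (subset_leq_card sub) _.
by rewrite cardsU leq_subr.
Qed.

Lemma cardX : #|X| = #|C| * (F - 2).
Proof.
rewrite (card_pair2 (fun j k => (k \in C) && (R j k != None))).
rewrite (eq_bigr (fun k => if k \in C then F - 2 else 0)).
  by rewrite -big_mkcond sum_nat_const.
move=> k _; case: (k \in C) => /=; last by apply: eq_card0 => j; rewrite inE.
by rewrite -(col_ne k).
Qed.

Lemma cardY1 : #|Y1| + 2 * #|C| <= F * #|W|.
Proof.
rewrite (card_pair (fun v k => (v \in W) && (R v k != None))) -sum_h.
rewrite -big_split /= mulnC -sum_nat_const [X in _ <= X]big_mkcond /=; apply: leq_sum => v _.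
case vW: (v \in W) => /=.
- have E1 := cardsC [set k | R v k == None]; rewrite card_ord in E1.
  have E2 : ~: [set k | R v k == None] = [set k | R v k != None].
    by apply/setP => k; rewrite !inE.
  rewrite E2 in E1.
  have : h v <= #|[set k | R v k == None]|.
    by apply: subset_leq_card; apply/subsetP => k; rewrite !inE => /andP [].
  move=> H; apply: (leq_trans (n := #|[set k | R v k == None]| + #|[set k | R v k != None]|)); last by rewrite E1.
  by rewrite addnC leq_add2r.
- rewrite (eq_card0 (A := _)); last by move=> k; rewrite inE.
  by move: vW; rewrite inE; case: (h v).
Qed.

Lemma D5 : \sum_v h v * (h v - 1) + 2 * (F + 1) * #|W| <= 2 * #|W| + (F + 1) * \sum_v h v.
Proof.
rewrite card_sum !big_distrr -!big_split /=; apply: leq_sum => v _.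
have := h_ne1 v; have := h_leF v; case: (h v) => [|[|n]] //= Hn _; nia.
Qed.

Lemma Wle : 2 * #|W| <= \sum_v h v.
Proof.
rewrite card_sum big_distrr /=; apply: leq_sum => v _.
by have := h_ne1 v; case: (h v) => [|[|n]].
Qed.

Lemma LBmain : 2 <= F -> 3 * F * F <= 6 * #|S| + 7 * F.
Proof.
move=> F2.
have m := main_count.
have t1 := T1_card; have t3 := T3_card.
have d1 := D1; have d5 := D5; have wl := Wle; have sh := sum_h.
have d4 := D4; have cx := cardX; have cy := cardY1.
have wF : #|W| <= F by have := max_card W; rewrite card_ord.
set n1 := \sum_t _ in m t1; set s3 := \sum_t _ in m t3.
set hh := \sum_v h v * (h v - 1) in d1 d5.
set sh' := \sum_v h v in d5 wl sh.
have [x Ex] : exists x, #|C| = #|W| + x by exists (#|C| - #|W|); lia.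
rewrite Ex in sh cx cy.
have i1 : 3 * s3 + (F + 1) * #|W| <= #|W| + (F + 1) * (#|W| + x) by nia.
have i2 : F * x <= n1 by nia.
have i3 : 3 * s3 <= F + 2 * n1 by nia.
have i4 : F * F = F * (F - 2) + 2 * F by nia.
nia.
Qed.

End LBs.

Lemma is_s_good F n : 3 <= F -> Good F n -> is_s F F 2 n.
Proof.
move=> F3 [[r [p H]] Hn]; split.
  by exists ('I_n); split; [rewrite card_ord | exact: PDA_of_inv H].
move=> S' [R' HR'].
have := LBmain HR' ltac:(lia); lia.
Qed.

Theorem mainTheorem19 (F : nat) (hF : 6 <= F) :
  exists a b : nat,
    is_s F F 2 a /\ is_s (F - 3) (F - 3) 2 b /\ a = 3 * F - 8 + b.
Proof.
have [b Hb] := @good_all (F - 3) (F - 3) (leqnn _) ltac:(lia).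
have Ha := good_step Hb.
have E : F - 3 + 3 = F by lia.
rewrite E in Ha.
exists (b + 3 * (F - 3) + 1), b; split; last split.
- by apply: is_s_good Ha; lia.
- by apply: is_s_good Hb; lia.
- lia.
Qed.
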